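(* Let $F=(n_F)_{n\ge1}\in\mathcal{T}_\lambda$, with functions $\lambda_K,\lambda_M$ as in the definition of $\mathcal{T}_\lambda$. Then for all integers $n\ge2$ and $1\le k\le n-1$, $$\binom{n}{k}_F=\lambda_K(k,n-k)\binom{n-1}{k-1}_F+\lambda_M(k,n-k)\binom{n-1}{k}_F,$$ and $\binom{n}{n}_F=\binom{n}{0}_F=1$.
   Context: Throughout, $\mathbb{N}=\{1,2,\dots\}$. The family $\mathcal{T}_\lambda$ consists of sequences $F=(n_F)_{n\ge1}$ of natural numbers for which there exist functions $\lambda_K,\lambda_M:\mathbb{N}\times\mathbb{N}\to\mathbb{N}\cup\{0\}$ such that $(k+m)_F=\lambda_K(k,m)\,k_F+\lambda_M(k,m)\,m_F$ for all $k,m\in\mathbb{N}$. We write $n_F!=n_F(n-1)_F\cdots1_F$, with $0_F!=1$, and $\binom{n}{m}_F=\frac{n_F!}{m_F!(n-m)_F!}$. *)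

(* Defs.v *)
From mathcomp Require Import all_boot all_order all_algebra.
Set Implicit Arguments. Unset Strict Implicit. Unset Printing Implicit Defensive.
Import GRing.Theory Num.Theory.

(* A sequence F = (n_F)_{n>=1} is modelled as F : nat -> nat; the value F 0 is
   never used (all hypotheses and definitions only look at F n for n >= 1). *)

Definition Ffact (F : nat -> nat) (n : nat) : nat := \prod_(1 <= i < n.+1) F i.

Definition Fbinom (F : nat -> nat) (n m : nat) : rat :=
  ((Ffact F n)%:R / ((Ffact F m)%:R * (Ffact F (n - m))%:R))%R.

Definition in_T_lambda (F : nat -> nat) (lamK lamM : nat -> nat -> nat) : Prop :=
  (forall n, 0 < n -> 0 < F n) /\
  (forall k m, 0 < k -> 0 < m -> F (k + m) = lamK k m * F k + lamM k m * F m).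

(* Main.v *)
Require Import Defs.
From mathcomp Require Import all_boot all_order all_algebra.
From mathcomp Require Import ring zify.
Import GRing.Theory Num.Theory.

Lemma FfactS F n : Ffact F n.+1 = (F n.+1 * Ffact F n)%N.
Proof. by rewrite /Ffact big_nat_recr //= mulnC. Qed.

Lemma Ffact_pos F : (forall n, 0 < n -> 0 < F n)%N -> forall n, (0 < Ffact F n)%N.
Proof.
move=> H; elim=> [|n IH]; first by rewrite /Ffact big_nil.
by rewrite FfactS muln_gt0 IH H.
Qed.

Theorem corollary3 (F : nat -> nat) (lamK lamM : nat -> nat -> nat) :
  in_T_lambda F lamK lamM ->
  (forall n k : nat, (2 <= n)%N -> (1 <= k <= n - 1)%N ->
     Fbinom F n k =
       GRing.add (GRing.mul ((lamK k (n - k)%N)%:R) (Fbinom F (n - 1)%N (k - 1)%N))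
                 (GRing.mul ((lamM k (n - k)%N)%:R) (Fbinom F (n - 1)%N k))) /\
  (forall n : nat, Fbinom F n n = 1%R /\ Fbinom F n 0 = 1%R).
Proof.
move=> [Hpos Hrec].
have Hf := @Ffact_pos F Hpos.
have nz : forall j, ((Ffact F j)%:R : rat) != 0%R.
  by move=> j; rewrite pnatr_eq0 -lt0n Hf.
split; last first.
  move=> n; rewrite /Fbinom subnn subn0 /Ffact big_nil mul1r mulr1 divff //.
  by have := nz n; rewrite /Ffact.
move=> n k Hn /andP[Hk1 Hk2].
have [m Em] : exists m, n = (k + m.+1)%N by exists (n - k).-1; lia.
have [k' Ek] : exists k', k = k'.+1 by exists k.-1; lia.
subst n k.
have e1 : (k'.+1 + m.+1 - k'.+1 = m.+1)%N by lia.
have e2 : (k'.+1 + m.+1 - 1 = k'.+1 + m)%N by lia.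
have e4 : (k'.+1 + m - k'.+1 = m)%N by lia.
have e5 : (k'.+1 - 1 = k')%N by lia.
have e6 : (k'.+1 + m - k' = m.+1)%N by lia.
rewrite /Fbinom e1 e2 e5 e6 e4.
have -> : (k'.+1 + m.+1 = (k'.+1 + m).+1)%N by lia.
rewrite FfactS.
have := Hrec k'.+1 m.+1 isT isT.
have -> : (k'.+1 + m.+1 = (k'.+1 + m).+1)%N by lia.
move=> ->.
rewrite (FfactS F k') (FfactS F m).
have hk : ((F k'.+1)%:R : rat) != 0%R by rewrite pnatr_eq0 -lt0n Hpos.
have hm : ((F m.+1)%:R : rat) != 0%R by rewrite pnatr_eq0 -lt0n Hpos.
have := nz k'; have := nz m; have := nz (k'.+1 + m)%N.
rewrite !natrM !natrD !natrM => h1 h2 h3.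
field.
by rewrite h2 h3 hk hm.
Qed.
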